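(* Let $N, J \ge 1$ be integers and let $F_1,\dots,F_J:\mathbb{R}_+^N\to\mathbb{R}_+$ be upper semicontinuous, concave functions that are homogeneous of degree 1. Define $F:\mathbb{R}_+^N\to\mathbb{R}_+$ by $$F(x)=\max\Big\{\sum_{j=1}^J F_j(x_j): x_j\in\mathbb{R}_+^N \text{ for all } j,\ \sum_{j=1}^J x_j=x\Big\}.$$ Let $\Delta=\{x\in\mathbb{R}_+^N:\sum_{n=1}^N x_n=1\}$. Then $$\operatorname{hyp} F|_\Delta=\operatorname{co}\Big(\bigcup_{j=1}^J \operatorname{hyp} F_j|_\Delta\Big).$$
   Context: For a function $f:D\to\mathbb{R}$, its hypograph is $\operatorname{hyp} f=\{(x,y)\in D\times\mathbb{R}: y\le f(x)\}$; $f|_\Delta$ denotes the restriction to $\Delta$, and $\operatorname{co}A$ denotes the convex hull of a set $A$. Homogeneous of degree 1 means $F_j(\lambda x)=\lambda F_j(x)$ for all $\lambda\ge0$. *)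

(* Defs.v *)
From HB Require Import structures.
From mathcomp Require Import all_boot all_order all_algebra.
From mathcomp Require Import all_classical all_reals all_analysis.
Set Implicit Arguments. Unset Strict Implicit. Unset Printing Implicit Defensive.
Import Order.TTheory GRing.Theory Num.Theory.
Import numFieldNormedType.Exports.
Local Open Scope classical_set_scope.
Local Open Scope ring_scope.

Definition orthant (R : realType) (N : nat) : set 'rV[R]_N :=
  [set x | forall i, 0 <= x ord0 i].

Definition simplex (R : realType) (N : nat) : set 'rV[R]_N :=
  [set x | (forall i, 0 <= x ord0 i) /\ \sum_(i < N) x ord0 i = 1].

Definition usc_on (R : realType) (N : nat) (D : set 'rV[R]_N)
  (f : 'rV[R]_N -> R) : Prop :=
  forall x, D x -> forall e : R, 0 < e ->
    \forall y \near x, D y -> f y < f x + e.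

Definition concave_on (R : realType) (N : nat) (D : set 'rV[R]_N)
  (f : 'rV[R]_N -> R) : Prop :=
  forall x y (t : R), D x -> D y -> 0 <= t <= 1 ->
    t * f x + (1 - t) * f y <= f (t *: x + (1 - t) *: y).

Definition homogeneous1_on (R : realType) (N : nat) (D : set 'rV[R]_N)
  (f : 'rV[R]_N -> R) : Prop :=
  forall x (l : R), D x -> 0 <= l -> f (l *: x) = l * f x.

Definition hyp_on (R : realType) (N : nat) (A : set 'rV[R]_N)
  (f : 'rV[R]_N -> R) : set ('rV[R]_N * R) :=
  [set p | A p.1 /\ p.2 <= f p.1].

Definition conv_hull (R : realType) (N : nat) (S : set ('rV[R]_N * R))
  : set ('rV[R]_N * R) :=
  [set p | exists (k : nat) (l : 'I_k -> R) (q : 'I_k -> 'rV[R]_N * R),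
      (forall i, 0 <= l i) /\ \sum_(i < k) l i = 1 /\
      (forall i, S (q i)) /\
      p = (\sum_(i < k) l i *: (q i).1, \sum_(i < k) l i * (q i).2)].

Definition infconv_values (R : realType) (N J : nat)
  (Fs : 'I_J -> 'rV[R]_N -> R) (x : 'rV[R]_N) : set R :=
  [set v | exists xs : 'I_J -> 'rV[R]_N,
      (forall j, orthant (xs j)) /\ \sum_(j < J) xs j = x /\
      v = \sum_(j < J) Fs j (xs j)].

(* F(x) = max of the above set (the max is attained under the hypotheses;
   we use the supremum, which coincides with it) *)
Definition infconv (R : realType) (N J : nat)
  (Fs : 'I_J -> 'rV[R]_N -> R) (x : 'rV[R]_N) : R :=
  sup (infconv_values Fs x).

(* Main.v *)
Require Import Defs.
From HB Require Import structures.
From mathcomp Require Import all_boot all_order all_algebra.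
From mathcomp Require Import all_classical all_reals all_analysis.
From mathcomp Require Import ring lra.
Import Order.TTheory GRing.Theory Num.Theory.
Import numFieldNormedType.Exports.
Local Open Scope classical_set_scope.
Local Open Scope ring_scope.
Set Implicit Arguments. Unset Strict Implicit. Unset Printing Implicit Defensive.

Lemma orthant0 (R : realType) N : @orthant R N 0.
Proof. by move=> i; rewrite mxE. Qed.

Lemma orthantD (R : realType) N (x y : 'rV[R]_N) :
  orthant x -> orthant y -> orthant (x + y).
Proof. by move=> hx hy i; rewrite mxE addr_ge0 ?hx ?hy. Qed.

Lemma orthantZ (R : realType) N (l : R) (x : 'rV[R]_N) :
  0 <= l -> orthant x -> orthant (l *: x).
Proof. by move=> hl hx i; rewrite mxE mulr_ge0 ?hx. Qed.

Lemma orthant_sum (R : realType) N (I : finType) (P : pred I)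
  (z : I -> 'rV[R]_N) :
  (forall i, orthant (z i)) -> orthant (\sum_(i | P i) z i).
Proof.
move=> hz; apply: (big_rec (fun b => orthant b)); first exact: orthant0.
by move=> i b _ hb; apply: orthantD.
Qed.

Lemma le_term (R : realType) (I : finType) (F : I -> R) i :
  (forall k, 0 <= F k) -> F i <= \sum_k F k.
Proof. by move=> h; rewrite (bigD1 i) //= lerDl sumr_ge0. Qed.

Lemma f0 (R : realType) N (f : 'rV[R]_N -> R) :
  homogeneous1_on (@orthant R N) f -> f 0 = 0.
Proof.
move=> hh; have := hh 0 0 (@orthant0 R N) (lexx _).
by rewrite scale0r mul0r.
Qed.

Lemma superadd (R : realType) N (f : 'rV[R]_N -> R) :
  concave_on (@orthant R N) f -> homogeneous1_on (@orthant R N) f ->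
  forall x y, orthant x -> orthant y -> f x + f y <= f (x + y).
Proof.
move=> hc hh x y hx hy.
have h2 : (0 : R) <= 2 by [].
have := hc (2 *: x) (2 *: y) (2^-1) (orthantZ h2 hx) (orthantZ h2 hy).
have e : 1 - 2^-1 = 2^-1 :> R by field.
rewrite e !scalerA mulVf ?pnatr_eq0 // !scale1r hh // hh //.
rewrite !mulrA mulVf ?pnatr_eq0 // !mul1r; apply.
by rewrite invr_ge0 h2 /= invf_le1 // ler1n.
Qed.

Lemma sum_superadd (R : realType) N (f : 'rV[R]_N -> R) :
  concave_on (@orthant R N) f -> homogeneous1_on (@orthant R N) f ->
  forall (I : finType) (P : pred I) (z : I -> 'rV[R]_N),
  (forall i, orthant (z i)) ->
  \sum_(i | P i) f (z i) <= f (\sum_(i | P i) z i).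
Proof.
move=> hc hh I P z hz.
suff : orthant (\sum_(i | P i) z i) /\ \sum_(i | P i) f (z i) <= f (\sum_(i | P i) z i) by case.
apply: (big_rec2 (fun a b => orthant b /\ a <= f b)).
  by split; [exact: orthant0 | rewrite f0].
move=> i a b _ [hb hab]; split; first exact: orthantD.
apply: le_trans (superadd hc hh (hz i) hb); by rewrite lerD2l.
Qed.

Lemma mono (R : realType) N (f : 'rV[R]_N -> R) :
  (forall x, orthant x -> 0 <= f x) ->
  concave_on (@orthant R N) f -> homogeneous1_on (@orthant R N) f ->
  forall x d, orthant x -> orthant d -> f x <= f (x + d).
Proof.
move=> hn hc hh x d hx hd; apply: le_trans (superadd hc hh hx hd).
by rewrite lerDl hn.
Qed.

Lemma dec_le1 (R : realType) N J (x : 'rV[R]_N) (xs : 'I_J -> 'rV[R]_N) :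
  simplex x -> (forall j, orthant (xs j)) -> \sum_j xs j = x ->
  forall j i, 0 <= xs j ord0 i <= 1.
Proof.
move=> [x0 x1] hxs hsum j i; rewrite hxs /=.
have : x ord0 i <= 1 by rewrite -x1; apply: le_term.
apply: le_trans; rewrite -hsum summxE.
apply: (@le_term R _ (fun k => xs k ord0 i) j) => k. exact: hxs.
Qed.

Lemma below_one (R : realType) N (f : 'rV[R]_N -> R) :
  (forall x, orthant x -> 0 <= f x) ->
  concave_on (@orthant R N) f -> homogeneous1_on (@orthant R N) f ->
  forall z : 'rV[R]_N, (forall i, 0 <= z ord0 i <= 1) -> f z <= f (const_mx 1).
Proof.
move=> hn hc hh z hz.
have -> : const_mx 1 = z + (const_mx 1 - z) by rewrite addrC subrK.
apply: mono => // i; first by case/andP: (hz i).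
by rewrite !mxE subr_ge0; case/andP: (hz i).
Qed.

Lemma has_sup_vals (R : realType) N J (Fs : 'I_J -> 'rV[R]_N -> R) x :
  (0 < J)%N ->
  (forall j x, orthant x -> 0 <= Fs j x) ->
  (forall j, concave_on (@orthant R N) (Fs j)) ->
  (forall j, homogeneous1_on (@orthant R N) (Fs j)) ->
  simplex x -> has_sup (infconv_values Fs x).
Proof.
move=> J0 hn hc hh hx; split.
  pose j0 := Ordinal J0.
  exists (\sum_j Fs j (if j == j0 then x else 0)).
  exists (fun j => if j == j0 then x else 0); split; last split => //.
    by move=> j; case: ifP => _; [case: hx|exact: orthant0].
  rewrite (bigD1 j0) //= ?eqxx big1 ?addr0 // => j /negbTE ->//.
exists (\sum_j Fs j (const_mx 1)) => _ [xs [hxs [hsum ->]]].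
apply: ler_sum => j _; apply: below_one; [exact: hn|exact: hc|exact: hh|].
exact: dec_le1 hx hxs hsum j.
Qed.

Lemma nbhs_prod (R : realType) J N (v : 'rV['rV[R]_N]_J)
  (P : 'I_J -> set 'rV[R]_N) : (forall j, nbhs (v ord0 j) (P j)) ->
  nbhs v [set w | forall j, P j (w ord0 j)].
Proof.
move=> HP; exists (fun i j => P j).
  by move=> i j; rewrite ord1; exact: HP.
by move=> w H j; exact: H.
Qed.

Lemma attain (R : realType) N J (Fs : 'I_J -> 'rV[R]_N -> R) x :
  (0 < J)%N ->
  (forall j x, orthant x -> 0 <= Fs j x) ->
  (forall j, usc_on (@orthant R N) (Fs j)) ->
  (forall j, concave_on (@orthant R N) (Fs j)) ->
  (forall j, homogeneous1_on (@orthant R N) (Fs j)) ->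
  simplex x ->
  exists xs : 'I_J -> 'rV[R]_N, (forall j, orthant (xs j)) /\
    \sum_j xs j = x /\ sup (infconv_values Fs x) <= \sum_j Fs j (xs j).
Proof.
move=> J0 hn hus hc hh hx.
set s := sup (infconv_values Fs x).
have hs := has_sup_vals J0 hn hc hh hx.
pose Box : set 'rV[R]_N := [set z | forall i, `[(0:R), 1]%classic (z ord0 i)].
have cBox : compact Box.
  have := (@rV_compact R N (fun _ => `[(0:R), 1]%classic) (fun _ => @segment_compact R 0 1)).
  by [].
pose BoxJ : set 'rV['rV[R]_N]_J := [set v | forall j, Box (v ord0 j)].
have cBoxJ : compact BoxJ by exact: (@rV_compact _ J (fun _ => Box) (fun _ => cBox)).
pose G (v : 'rV['rV[R]_N]_J) := \sum_j Fs j (v ord0 j).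
pose S (e : R) := [set v : 'rV['rV[R]_N]_J | (forall j, orthant (v ord0 j)) /\
   \sum_j v ord0 j = x /\ s - e < G v].
pose Flt := filter_from [set e : R | 0 < e] S.
have FF : ProperFilter Flt.
  apply: filter_from_proper.
    apply: filter_from_filter; first by exists 1; exact: ltr01.
    move=> e1 e2 he1 he2; exists (Num.min e1 e2); first by rewrite /= lt_min he1.
    move=> v [a [b c]]; split; (split; [done|split; [done|]]);
      apply: le_lt_trans c; by rewrite lerD2l lerN2 ge_min lexx ?orbT.
  move=> e he; have [v [xs [hxs [hsum ->]]] hv] := sup_adherent he hs.
  exists (\row_j xs j); split; first by move=> j; rewrite mxE.
  rewrite /G; under eq_bigr do rewrite mxE.
  split => //; under eq_bigr do rewrite mxE; by [].
have FB : Flt BoxJ.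
  exists 1; first exact: ltr01.
  move=> v [h1 [h2 _]] j i; rewrite /= in_itv /=.
  exact: (dec_le1 (xs := fun j => v ord0 j) hx h1 h2).
have [vs [Bv clv]] := cBoxJ Flt FF FB.
pose xs j := vs ord0 j.
have xsO : forall j, orthant (xs j).
  by move=> j i; have := Bv j i; rewrite /= in_itv /= => /andP[].
have meet : forall e B, 0 < e -> nbhs vs B -> exists w, S e w /\ B w.
  move=> e B he hB; have [w [h1 h2]] := clv (S e) B (ex_intro2 _ _ e he (@subset_refl _ _)) hB.
  by exists w.
have J0' : (0 : R) < J%:R + 1 by rewrite ltr_wpDl // ler0n.
exists xs; split => //; split.
  apply/rowP => i; rewrite summxE.
  apply/eqP; apply/negPn/negP => hne.
  set a := \sum_j xs j ord0 i.
  set d := `|a - x ord0 i|.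
  have d0 : 0 < d by rewrite normr_gt0 subr_eq0.
  set e := d / (J%:R + 1).
  have e0 : 0 < e by rewrite divr_gt0.
  have [w [[w1 [w2 _]] w3]] := meet 1 _ ltr01
     (nbhs_prod (fun j => nbhsx_ballx (xs j) e e0)).
  have hb : x ord0 i = \sum_j w ord0 j ord0 i by rewrite -w2 summxE.
  have : d <= J%:R * e.
    rewrite /d hb /a -sumrB; apply: le_trans (ler_norm_sum _ _ _) _.
    have -> : J%:R * e = \sum_(j < J) e by rewrite sumr_const card_ord mulr_natl.
    apply: ler_sum => j _; apply: ltW.
    by case: (w3 j) => _ /(_ ord0 i).
  have : J%:R * e < d.
    rewrite /e mulrA ltr_pdivrMr //; nra.
  lra.
apply/ler_addgt0Pr => e0 he0.
set e := e0 / (J%:R + 1).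
have e0' : 0 < e by rewrite divr_gt0.
have [w [[w1 [w2 w3]] w4]] := meet e _ e0'
   (nbhs_prod (fun j => hus j (xs j) (xsO j) e e0')).
have : G w <= \sum_j Fs j (xs j) + J%:R * e.
  have -> : J%:R * e = \sum_(j < J) e by rewrite sumr_const card_ord mulr_natl.
  rewrite -big_split /=; apply: ler_sum => j _; apply: ltW.
  exact: (w4 j (w1 j)).
have : J%:R * e + e = e0.
  rewrite /e; field; apply/lt0r_neq0; exact: J0'.
lra.
Qed.

Unset Implicit Arguments.
Theorem theorem3 (R : realType) (N J : nat) (Fs : 'I_J -> 'rV[R]_N -> R) :
  (0 < N)%N -> (0 < J)%N ->
  (forall j x, orthant x -> 0 <= Fs j x) ->
  (forall j, usc_on (@orthant R N) (Fs j)) ->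
  (forall j, concave_on (@orthant R N) (Fs j)) ->
  (forall j, homogeneous1_on (@orthant R N) (Fs j)) ->
  hyp_on (@simplex R N) (infconv Fs) =
  conv_hull (\bigcup_(j in [set: 'I_J]) hyp_on (@simplex R N) (Fs j)).
Proof.
move=> N0 J0 hn hus hc hh; apply/seteqP; split.
  move=> [x y] [/= hx hy].
  have [xs [hxs [hsum hG]]] := attain J0 hn hus hc hh hx.
  set G := \sum_j Fs j (xs j) in hG.
  set dl := G - y.
  have dl0 : 0 <= dl by rewrite subr_ge0; apply: le_trans hG.
  pose sj j := \sum_i xs j ord0 i.
  have sj0 : forall j, 0 <= sj j by move=> j; apply: sumr_ge0 => i _; apply: hxs.
  have xs0 : forall j, sj j = 0 -> xs j = 0.
    move=> j hj; apply/rowP => i; rewrite mxE.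
    by apply: (psumr_eq0P (P := predT) (fun i _ => hxs j i) hj).
  pose q j := if sj j == 0 then (x, Fs j x)
              else ((sj j)^-1 *: xs j, Fs j ((sj j)^-1 *: xs j) - dl).
  exists J, sj, q; split => //; split; last split.
  - rewrite exchange_big /=; case: hx => _ <-; apply: eq_bigr => i _.
    by rewrite -hsum summxE.
  - move=> j; exists j => //; rewrite /q; case: ifPn => hj.
      by split.
    split => /=.
      split; first by move=> i; rewrite mxE mulr_ge0 ?invr_ge0 ?sj0 ?hxs.
      under eq_bigr do rewrite mxE; rewrite -mulr_sumr mulVf //.
    by rewrite lerBlDr lerDl.
  - congr pair.
      rewrite -hsum; apply: eq_bigr => j _; rewrite /q.
      case: ifPn => hj /=.
        by rewrite (eqP hj) scale0r xs0 // (eqP hj).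
      by rewrite scalerA mulfV // scale1r.
    have hs1 : \sum_i sj i = 1.
      rewrite exchange_big /=; case: hx => _ <-; apply: eq_bigr => i _.
      by rewrite -hsum summxE.
    apply/esym; have -> : \sum_j sj j * (q j).2 = \sum_j (Fs j (xs j) - dl * sj j).
      apply: eq_bigr => j _; rewrite /q; case: ifPn => hj /=.
        by rewrite (eqP hj) mul0r mulr0 subr0 xs0 ?(eqP hj) // f0.
      rewrite mulrBr -hh ?scalerA ?mulfV ?scale1r 1?mulrC //.
      by apply: orthantZ => //; rewrite invr_ge0.
    by rewrite sumrB -mulr_sumr hs1 mulr1 /dl /G; lra.
move=> [x y] [k [l [q [hl [hl1 [hq hp]]]]]].
have : forall i, exists j, hyp_on (@simplex R N) (Fs j) (q i).
  by move=> i; have [j _ hj] := hq i; exists j.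
case/choice => c hcq.
case: hp => -> -> {x y}.
have part : forall (V : zmodType) (g : 'I_k -> V),
    \sum_i g i = \sum_j \sum_(i | c i == j) g i.
  by move=> V g; rewrite (partition_big c predT).
have qO : forall i, orthant (q i).1 by move=> i; case: (hcq i) => [[]].
have hx : simplex (\sum_i l i *: (q i).1).
  split.
    move=> n; rewrite summxE; apply: sumr_ge0 => i _; rewrite mxE.
    by rewrite mulr_ge0 ?hl ?qO.
  under eq_bigr do rewrite summxE.
  rewrite exchange_big /= -hl1; apply: eq_bigr => i _.
  under eq_bigr do rewrite mxE; rewrite -mulr_sumr.
  by case: (hcq i) => [[_ ->] _]; rewrite mulr1.
split => //=.
pose xs j := \sum_(i | c i == j) l i *: (q i).1.
apply: le_trans (sup_upper_bound (has_sup_vals J0 hn hc hh hx) _).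
  2: { exists xs; split; first by move=> j; apply: orthant_sum => i; apply: orthantZ.
       split; [by rewrite /xs -part | reflexivity]. }
rewrite part; apply: ler_sum => j _.
apply: le_trans (sum_superadd (hc j) (hh j) _ (fun i => orthantZ (hl i) (qO i))).
apply: ler_sum => i /eqP <-.
rewrite hh ?qO //; apply: ler_wpM2l => //.
by case: (hcq i).
Qed.
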